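(* Assume that $\hat R$ satisfies condition (ii) and let $\hat F\in\mathrm{Aut}(V\otimes V)$. Let $M$ and $M'$ be operators on $V$ with entries in a common associative algebra $\mathfrak A$, both half-quantum matrices, i.e. $S^{(2)}_{12}M_{\bar1}M_{\bar2}A^{(2)}_{12}=0$ and $S^{(2)}_{12}M'_{\bar1}M'_{\bar2}A^{(2)}_{12}=0$, and satisfying \[ \hat F_{12}M_1\hat F_{12}^{-1}M'_1=M'_1\hat F_{12}M_1\hat F_{12}^{-1}. \] Then the product $MM'$ (matrix product with entries in $\mathfrak A$) is again a half-quantum matrix: $S^{(2)}_{12}(MM')_{\bar1}(MM')_{\bar2}A^{(2)}_{12}=0$.
   Context: Let $V$ be a finite-dimensional complex vector space, $\mathrm{Id}$ the identity. For an operator $X$ on $V$ (possibly with entries in $\mathfrak A$), $X_j$ denotes $X$ acting in the $j$-th tensor factor of $V\otimes V$; for $Y$ on $V\otimes V$, $Y_{12}=Y$. Condition (ii): $q\in\mathbb C^*$ with $q+q^{-1}\ne0$ and $\hat R=qS^{(2)}-q^{-1}A^{(2)}$ with $S^{(2)},A^{(2)}$ idempotents on $V\otimes V$, $S^{(2)}+A^{(2)}=\mathrm{Id}$. For an $\mathfrak A$-valued $N$ on $V$: $N_{\bar1}:=N_1$, $N_{\bar2}:=\hat F_{12}N_1\hat F_{12}^{-1}$. *)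

(* Defs.v *)
From HB Require Import structures.
From mathcomp Require Import all_boot all_order all_algebra.
Set Implicit Arguments. Unset Strict Implicit. Unset Printing Implicit Defensive.
Import GRing.Theory.
Local Open Scope ring_scope.

(* V = K^n ; V (x) V = K^(n*n), the basis vector e_i (x) e_j having index
   mxvec_index i j (first tensor factor = first component). *)

Definition tens_pair (n : nat) (k : 'I_(n * n)) : 'I_n * 'I_n :=
  enum_val (cast_ord (esym (mxvec_cast n n)) k).

(* X_1 = X (x) Id, for an operator X on V with entries in an algebra A *)
Definition leg1 (R : pzRingType) (n : nat) (X : 'M[R]_n) : 'M[R]_(n * n) :=
  \matrix_(a, b) (if (tens_pair a).2 == (tens_pair b).2
                  then X (tens_pair a).1 (tens_pair b).1 else 0).

Definition liftA (K : fieldType) (A : algType K) (m : nat) (Y : 'M[K]_m)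
  : 'M[A]_m := map_mx (fun k : K => k%:A) Y.
Arguments liftA {K} A {m} Y.

Definition bar1 (K : fieldType) (A : algType K) (n : nat) (N : 'M[A]_n)
  : 'M[A]_(n * n) := leg1 N.

Definition bar2 (K : fieldType) (A : algType K) (n : nat)
  (F : 'M[K]_(n * n)) (N : 'M[A]_n) : 'M[A]_(n * n) :=
  liftA A F *m leg1 N *m liftA A (invmx F).

Definition half_quantum (K : fieldType) (A : algType K) (n : nat)
  (S2 A2 F : 'M[K]_(n * n)) (N : 'M[A]_n) : Prop :=
  liftA A S2 *m bar1 N *m bar2 F N *m liftA A A2 = 0.

Definition condition_ii (K : fieldType) (n : nat) (q : K)
  (Rhat S2 A2 : 'M[K]_(n * n)) : Prop :=
  [/\ q != 0, q + q^-1 != 0, Rhat = q *: S2 - q^-1 *: A2 &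
      [/\ S2 *m S2 = S2, A2 *m A2 = A2 & S2 + A2 = 1%:M]].

(* Main.v *)
Require Import Defs.
From HB Require Import structures.
From mathcomp Require Import all_boot all_order all_algebra.
Import GRing.Theory.
Local Open Scope ring_scope.

Section H.
Variables (K : fieldType) (Alg : algType K).

Lemma liftAM m p r (X : 'M[K]_(m, p)) (Y : 'M[K]_(p, r)) :
  map_mx (fun k : K => k%:A : Alg) (X *m Y)
  = map_mx (fun k : K => k%:A : Alg) X *m map_mx (fun k : K => k%:A : Alg) Y.
Proof. exact: (map_mxM (in_alg Alg)). Qed.

Lemma liftA1 m : liftA Alg (1%:M : 'M[K]_m) = 1%:M.
Proof. rewrite /liftA (map_scalar_mx (in_alg Alg)) /=. by rewrite scale1r. Qed.

Lemma liftAD m (X Y : 'M[K]_m) : liftA Alg (X + Y) = liftA Alg X + liftA Alg Y.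
Proof. exact: (map_mxD (in_alg Alg)). Qed.

Lemma leg1M n (M M' : 'M[Alg]_n) : leg1 (M *m M') = leg1 M *m leg1 M'.
Proof.
apply/matrixP => a b; rewrite !mxE.
pose g (p : 'I_n * 'I_n) : 'I_(n * n) := cast_ord (mxvec_cast n n) (enum_rank p).
have gK : forall p, tens_pair (g p) = p.
  by move=> p; rewrite /tens_pair /g cast_ordK enum_rankK.
have bij : bijective g.
  exists (@tens_pair n) => // k; rewrite /g /tens_pair.
  by rewrite enum_valK cast_ordKV.
rewrite (reindex g); last by apply: onW_bij.
under eq_bigr => p _ do rewrite !mxE gK.
rewrite -(pair_big predT predT (fun c1 c2 =>
  (if (tens_pair a).2 == c2 then M (tens_pair a).1 c1 else 0) *
  (if c2 == (tens_pair b).2 then M' c1 (tens_pair b).1 else 0))) /=.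
case: eqP => [e|ne].
  apply: eq_bigr => c1 _; rewrite (bigD1 (tens_pair a).2) //= eqxx e eqxx big1 ?addr0 //.
  by move=> c2 /negPf; rewrite eq_sym => ->; rewrite mul0r.
rewrite big1 // => c1 _; apply: big1 => c2 _.
case: eqP => [<-|]; last by rewrite mul0r.
by case: eqP => [/ne []|]; rewrite mulr0.
Qed.

End H.

Theorem mainTheorem8 (K : fieldType) (Alg : algType K) (n : nat) (q : K)
  (Rhat S2 A2 F : 'M[K]_(n * n)) (M M' : 'M[Alg]_n) :
  condition_ii q Rhat S2 A2 ->
  F \in unitmx ->
  half_quantum S2 A2 F M ->
  half_quantum S2 A2 F M' ->
  liftA Alg F *m leg1 M *m liftA Alg (invmx F) *m leg1 M'
    = leg1 M' *m liftA Alg F *m leg1 M *m liftA Alg (invmx F) ->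
  half_quantum S2 A2 F (M *m M').
Proof.
case=> _ _ _ [_ _ SA] Fu; rewrite /half_quantum /bar1 /bar2 => h1 h2 hc.
set S := liftA Alg S2 in h1 h2 *; set A := liftA Alg A2 in h1 h2 *.
set Fl := liftA Alg F in h1 h2 hc *; set Fi := liftA Alg (invmx F) in h1 h2 hc *.
have SA' : S + A = 1%:M by rewrite /S /A -liftAD SA; exact: liftA1.
have FFi : Fi *m Fl = 1%:M by rewrite /Fi /Fl /liftA -liftAM mulVmx //; exact: liftA1.
have key : forall X : 'M[Alg]_(n * n), S *m X *m A = 0 -> X *m A = A *m X *m A.
  move=> X h; rewrite -[X *m A]mul1mx -SA' mulmxDl !mulmxA h add0r //.
rewrite leg1M.
set P := leg1 M in h1 hc *; set P' := leg1 M' in h2 hc *.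
have hc' : (Fl *m P *m Fi) *m P' = P' *m (Fl *m P *m Fi) by rewrite hc !mulmxA.
set Q := Fl *m P *m Fi in h1 hc' *; set Q' := Fl *m P' *m Fi in h2 *.
have -> : Fl *m (P *m P') *m Fi = Q *m Q'.
  by rewrite /Q /Q' !mulmxA -[Fl *m P *m Fi *m Fl]mulmxA FFi mulmx1.
have e : P' *m Q' *m A = A *m (P' *m Q') *m A.
  apply: key; rewrite !mulmxA; move: h2; rewrite /Q' !mulmxA; exact.
have -> : S *m (P *m P') *m (Q *m Q') *m A = S *m P *m (P' *m Q) *m (Q' *m A).
  by rewrite !mulmxA.
rewrite -hc'.
have -> : S *m P *m (Q *m P') *m (Q' *m A) = S *m P *m Q *m (P' *m Q' *m A).
  by rewrite !mulmxA.
rewrite e.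
have -> : S *m P *m Q *m (A *m (P' *m Q') *m A) = (S *m P *m Q *m A) *m (P' *m Q') *m A.
  by rewrite !mulmxA.
by rewrite h1 !mul0mx.
Qed.
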